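(* Fix any total budget $\mathrm{TB}\in\mathbb N_0$ and a game form $G$. If $G$ is a number, then $G+\bar G=0$.
   Context: Game forms are defined recursively: $G=\{G^{\mathcal L}\mid G^{\mathcal R}\}$ with finite sets of Left and Right options, and finite birthday. $0=\{\varnothing\mid\varnothing\}$. The conjugate is $\bar G=\{\overline{G^{\mathcal R}}\mid\overline{G^{\mathcal L}}\}$ (recursively, roles of the players swapped). The budget set for total budget $\mathrm{TB}$ is $\mathcal B=\{0,\dots,\mathrm{TB},\hat 0,\dots,\widehat{\mathrm{TB}}\}$: state $p$ (resp. $\hat p$) means Left holds $p$ dollars and Right holds $\mathrm{TB}-p$, and Right (resp. Left) holds the tie-breaking marker. Play of $(G,\tilde p)$: at every position (terminal ones included) both players bid simultaneously, Left $\ell\in\{0,\dots,p\}$, Right $r\in\{0,\dots,\mathrm{TB}-p\}$. If Left holds the marker (state $\hat p$): if $\ell>r$ Left moves to $(G^L,\widehat{p-\ell})$, or, including the marker (allowed when $\ell\ge r$), to $(G^L,p-\ell)$; if $\ell=r$ Left wins, the marker passes to Right, play continues at $(G^L,p-\ell)$; if $\ell<r$ Right moves to $(G^R,\widehat{p+r})$. Symmetrically when Right holds the marker (state $p$): if $r>\ell$ Right moves to $(G^R,p+r)$ or, including the marker, to $(G^R,\widehat{p+r})$; if $r=\ell$ Right wins, the marker passes to Left, play continues at $(G^R,\widehat{p+r})$; if $r<\ell$ Left moves to $(G^L,p-\ell)$. A player who wins a bid but has no option loses. $o(G,\tilde p)\in\{\mathrm L,\mathrm R\}$ is the winner under optimal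 play; $\mathrm L>\mathrm R$. Disjunctive sum $G+H=\{G^{\mathcal L}+H,G+H^{\mathcal L}\mid G^{\mathcal R}+H,G+H^{\mathcal R}\}$. $G\ge H$ means $o(G+X,\tilde p)\ge o(H+X,\tilde p)$ for all game forms $X$ and all $\tilde p\in\mathcal B$; $G=H$ means $G\ge H$ and $H\ge G$; $G>H$ means $G\ge H$ and not $H\ge G$. A game form $G$ is a number if all its options are numbers and $G^L<G<G^R$ for all $G^L\in G^{\mathcal L}$, $G^R\in G^{\mathcal R}$. *)

(* Defs.v *)
From Stdlib Require List.
From mathcomp Require Import all_boot.
Set Implicit Arguments. Unset Strict Implicit. Unset Printing Implicit Defensive.

(* Game forms: finite lists of Left and Right options (finite birthday by
   construction of the inductive type). *)
Inductive game : Type := Game : seq game -> seq game -> game.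

Definition lefts (g : game) : seq game := let: Game l _ := g in l.
Definition rights (g : game) : seq game := let: Game _ r := g in r.

Definition zero : game := Game [::] [::].

Fixpoint game_conj (g : game) : game :=
  let: Game l r := g in Game [seq game_conj x | x <- r] [seq game_conj x | x <- l].

Fixpoint game_add (g : game) : game -> game :=
  fix game_add_g (h : game) : game :=
    match g, h with
    | Game gl gr, Game hl hr =>
        Game ([seq game_add x h | x <- gl] ++ [seq game_add_g y | y <- hl])
             ([seq game_add x h | x <- gr] ++ [seq game_add_g y | y <- hr])
    end.

(* Outcome of the discrete bidding game with total budget TB.
   State (p, m): Left holds p dollars, Right holds TB - p;
   m = true  means Left holds the tie-breaking marker (the state written p-hat),
   m = false means Right holds the marker (the state written p).
   Result: true = L wins, false = R wins.
   o(G, (p,m)) = L iff Left has a bid l in [0,p] such that for every Right bid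
   r in [0, TB-p] the continuation is a Left win; the winner of a bid chooses
   an option (and, where allowed, whether to keep the marker); a player who
   wins the bid but has no option loses. *)
Fixpoint outcome (TB : nat) (g : game) (p : nat) (m : bool) : bool :=
  let: Game gl gr := g in
  let leftWin (ts : seq (nat * bool)) :=
      has (fun x => has (fun t => outcome TB x t.1 t.2) ts) gl in
  let rightWin (ts : seq (nat * bool)) :=
      all (fun x => all (fun t => outcome TB x t.1 t.2) ts) gr in
  has (fun l =>
         all (fun r =>
                if m then
                  (if r < l then leftWin [:: (p - l, true); (p - l, false)]
                   else if l == r then leftWin [:: (p - l, false)]
                   else rightWin [:: (p + r, true)])
                else
                  (if l < r then rightWin [:: (p + r, false); (p + r, true)]
                   else if l == r then rightWin [:: (p + r, true)]
                   else leftWin [:: (p - l, false)]))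
             (iota 0 (TB - p).+1))
      (iota 0 p.+1).

Definition game_ge (TB : nat) (G H : game) : Prop :=
  forall (X : game) (p : nat) (m : bool), p <= TB ->
    outcome TB (game_add H X) p m -> outcome TB (game_add G X) p m.

Definition game_eq (TB : nat) (G H : game) : Prop :=
  game_ge TB G H /\ game_ge TB H G.

Definition game_gt (TB : nat) (G H : game) : Prop :=
  game_ge TB G H /\ ~ game_ge TB H G.

Inductive is_number (TB : nat) : game -> Prop :=
  | is_number_intro (l r : seq game) :
      (forall x, List.In x l -> is_number TB x) ->
      (forall x, List.In x r -> is_number TB x) ->
      (forall x, List.In x l -> game_gt TB (Game l r) x) ->
      (forall x, List.In x r -> game_gt TB x (Game l r)) ->
      is_number TB (Game l r).

(* Main.v *)
Require Import Defs.
From Stdlib Require List.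
From mathcomp Require Import all_boot.
From mathcomp Require Import zify.
Set Implicit Arguments. Unset Strict Implicit. Unset Printing Implicit Defensive.


Definition lw TB (gl : seq game) (ts : seq (nat * bool)) :=
  has (fun x => has (fun t => outcome TB x t.1 t.2) ts) gl.
Definition rw TB (gr : seq game) (ts : seq (nat * bool)) :=
  all (fun x => all (fun t => outcome TB x t.1 t.2) ts) gr.
Definition cond TB g p (m : bool) l r :=
  if m then
    (if r < l then lw TB (lefts g) [:: (p - l, true); (p - l, false)]
     else if l == r then lw TB (lefts g) [:: (p - l, false)]
     else rw TB (rights g) [:: (p + r, true)])
  else
    (if l < r then rw TB (rights g) [:: (p + r, false); (p + r, true)]
     else if l == r then rw TB (rights g) [:: (p + r, true)]
     else lw TB (lefts g) [:: (p - l, false)]).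

Lemma outcome_def TB g p m : outcome TB g p m =
  has (fun l => all (fun r => cond TB g p m l r) (iota 0 (TB - p).+1)) (iota 0 p.+1).
Proof. by case: g. Qed.

Lemma outP TB g p m : reflect (exists2 l, l <= p & forall r, r <= TB - p -> cond TB g p m l r)
  (outcome TB g p m).
Proof.
rewrite outcome_def; apply: (iffP hasP) => [[l Hl /allP H]|[l Hl H]].
  exists l; first by rewrite mem_iota in Hl; lia.
  by move=> r Hr; apply: H; rewrite mem_iota; lia.
exists l; first by rewrite mem_iota; lia.
by apply/allP => r; rewrite mem_iota => Hr; apply: H; lia.
Qed.

Lemma outNP TB g p m : reflect (forall l, l <= p -> exists2 r, r <= TB - p & ~~ cond TB g p m l r)
  (~~ outcome TB g p m).
Proof.
rewrite outcome_def; apply: (iffP hasPn) => [H l Hl|H l].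
  have Hl' : l \in iota 0 p.+1 by rewrite mem_iota; lia.
  have /allPn [r Hr Hc] := H l Hl'.
  by exists r => //; rewrite mem_iota in Hr; lia.
rewrite mem_iota => Hl; have Hl' : l <= p by lia.
have [r Hr Hc] := H l Hl'.
by apply/allPn; exists r => //; rewrite mem_iota; lia.
Qed.

Lemma has_In (T : Type) (a : pred T) (s : seq T) :
  has a s <-> exists x, List.In x s /\ a x.
Proof.
elim: s => [|y s IH] /=; first by split => // [[x []]].
split.
  by case/orP => [H|/IH [x [Hx Ha]]]; [exists y; auto | exists x; auto].
by move=> [x [[<-|Hx] Ha]]; apply/orP; [left | right; apply/IH; exists x].
Qed.

Lemma all_In (T : Type) (a : pred T) (s : seq T) :
  all a s <-> forall x, List.In x s -> a x.
Proof.
elim: s => [|y s IH] /=; first by split.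
split.
  by case/andP => Hy /IH H x [<-|Hx]; auto.
by move=> H; apply/andP; split; [apply: H; left | apply/IH => x Hx; apply: H; right].
Qed.

Lemma lwinP TB l ts : lw TB l ts <->
  exists x, List.In x l /\ exists t, List.In t ts /\ outcome TB x t.1 t.2.
Proof.
rewrite /lw has_In; split => [[x [Hx /has_In Ht]]|[x [Hx Ht]]]; exists x; split => //.
by apply/has_In.
Qed.

Lemma rwinP TB l ts : rw TB l ts <->
  forall x, List.In x l -> forall t, List.In t ts -> outcome TB x t.1 t.2.
Proof.
rewrite /rw all_In; split => H x Hx.
  by move/all_In: (H x Hx).
by apply/all_In; apply: H.
Qed.

Lemma lefts_add K X : lefts (game_add K X) =
  [seq game_add k X | k <- lefts K] ++ [seq game_add K x | x <- lefts X].
Proof. by case: K; case: X. Qed.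
Lemma rights_add K X : rights (game_add K X) =
  [seq game_add k X | k <- rights K] ++ [seq game_add K x | x <- rights X].
Proof. by case: K; case: X. Qed.
Lemma lefts_conj C : lefts (game_conj C) = [seq game_conj c | c <- rights C].
Proof. by case: C. Qed.
Lemma rights_conj C : rights (game_conj C) = [seq game_conj c | c <- lefts C].
Proof. by case: C. Qed.

Lemma In_add_lefts y K X : List.In y (lefts (game_add K X)) <->
  (exists k, List.In k (lefts K) /\ y = game_add k X) \/
  (exists x, List.In x (lefts X) /\ y = game_add K x).
Proof.
rewrite lefts_add List.in_app_iff !List.in_map_iff.
by split => [[[k [<- Hk]]|[x [<- Hx]]]|[[k [Hk ->]]|[x [Hx ->]]]]; eauto.
Qed.
Lemma In_add_rights y K X : List.In y (rights (game_add K X)) <->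
  (exists k, List.In k (rights K) /\ y = game_add k X) \/
  (exists x, List.In x (rights X) /\ y = game_add K x).
Proof.
rewrite rights_add List.in_app_iff !List.in_map_iff.
by split => [[[k [<- Hk]]|[x [<- Hx]]]|[[k [Hk ->]]|[x [Hx ->]]]]; eauto.
Qed.

Fixpoint gsize (g : game) : nat :=
  let: Game l r := g in (sumn (map gsize l) + sumn (map gsize r)).+1.

Lemma sumn_In x l : List.In x l -> gsize x <= sumn (map gsize l).
Proof. elim: l => //= y l IH [<-|/IH]; lia. Qed.

Lemma size_lefts x g : List.In x (lefts g) -> gsize x < gsize g.
Proof. case: g => l r /= /sumn_In; lia. Qed.
Lemma size_rights x g : List.In x (rights g) -> gsize x < gsize g.
Proof. case: g => l r /= /sumn_In; lia. Qed.
Lemma gsize_pos g : 0 < gsize g.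
Proof. by case: g. Qed.


Lemma lw_gen TB l ts l' ts' :
  (forall x t, List.In x l -> List.In t ts -> outcome TB x t.1 t.2 ->
     exists x' t', [/\ List.In x' l', List.In t' ts' & outcome TB x' t'.1 t'.2]) ->
  lw TB l ts -> lw TB l' ts'.
Proof.
move=> H /lwinP [x [Hx [t [Ht Ho]]]]; have [x' [t' [Hx' Ht' Ho']]] := H x t Hx Ht Ho.
by apply/lwinP; exists x'; split => //; exists t'.
Qed.

Lemma mono TB X p m : p < TB -> outcome TB X p m -> outcome TB X p.+1 m.
Proof.
move: {2}(gsize X) (leqnn (gsize X)) => n; elim: n X p m => [|n IH] X p m Hs.
  by have := gsize_pos X; lia.
move=> Hp /outP [l Hl H]; apply/outP; exists l; first lia.
move=> r Hr; have Hr' : r <= TB - p by lia.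
move: (H r Hr'); clear H; rewrite /cond.
case: m; case: (ltngtP l r) => Hlr /=.
- move/rwinP => HH; apply/rwinP => x Hx t [<-|//] /=.
  have := HH x Hx (p + r, true) (or_introl erefl) => /= Ho.
  rewrite addSn; apply: IH => //; [have := size_rights Hx; lia | lia].
- apply: lw_gen => x t Hx [<-|[<-|//]] /= Ho; exists x.
  + exists (p.+1 - l, true); split => //; first by left.
    have -> : p.+1 - l = (p - l).+1 by lia.
    apply: IH => //; [have := size_lefts Hx; lia | lia].
  + exists (p.+1 - l, false); split => //; first by right; left.
    have -> : p.+1 - l = (p - l).+1 by lia.
    apply: IH => //; [have := size_lefts Hx; lia | lia].
- apply: lw_gen => x t Hx [<-|//] /= Ho; exists x.
  exists (p.+1 - l, false); split => //; first by left.
  have -> : p.+1 - l = (p - l).+1 by lia.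
  apply: IH => //; [have := size_lefts Hx; lia | lia].
- move/rwinP => HH; apply/rwinP => x Hx t Ht.
  have Hs' := size_rights Hx.
  case: Ht => [<-|[<-|//]] /=; rewrite addSn; apply: IH; try lia.
  + exact: (HH x Hx (p + r, false) (or_introl erefl)).
  + exact: (HH x Hx (p + r, true) (or_intror (or_introl erefl))).
- apply: lw_gen => x t Hx [<-|//] /= Ho; exists x.
  exists (p.+1 - l, false); split => //; first by left.
  have -> : p.+1 - l = (p - l).+1 by lia.
  apply: IH => //; [have := size_lefts Hx; lia | lia].
- move/rwinP => HH; apply/rwinP => x Hx t [<-|//] /=.
  have := HH x Hx (p + r, true) (or_introl erefl) => /= Ho.
  rewrite addSn; apply: IH => //; [have := size_rights Hx; lia | lia].
Qed.

Lemma monok TB X p m k : p + k <= TB -> outcome TB X p m -> outcome TB X (p + k) m.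
Proof.
elim: k => [|k IH] H Ho; first by rewrite addn0.
rewrite addnS; apply: mono; first lia.
apply: IH => //; lia.
Qed.

Lemma monole TB X p q m : p <= q -> q <= TB -> outcome TB X p m -> outcome TB X q m.
Proof. move=> Hpq HqT Ho; have -> : q = p + (q - p) by lia. apply: monok => //; lia. Qed.


Fixpoint Pos (g : game) : bool :=
  let: Game l r := g in all Pos r && has (fun x => let: Game _ xr := x in all Pos xr) l.
Definition Nn (g : game) : bool := all Pos (rights g).
Lemma PosE g : Pos g = Nn g && has Nn (lefts g).
Proof. case: g => l r /=; congr (_ && _); apply: eq_has => -[]. by []. Qed.

Fixpoint PosR (g : game) : bool :=
  let: Game l r := g in all PosR l && has (fun x => let: Game xl _ := x in all PosR xl) r.
Definition NnR (g : game) : bool := all PosR (lefts g).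
Lemma PosRE g : PosR g = NnR g && has NnR (rights g).
Proof. case: g => l r /=; congr (_ && _); apply: eq_has => -[]. by []. Qed.

Lemma Pos_Nn g : Pos g -> Nn g.
Proof. by rewrite PosE => /andP []. Qed.
Lemma PosR_NnR g : PosR g -> NnR g.
Proof. by rewrite PosRE => /andP []. Qed.

Lemma lw_right TB K X ts :
  (forall x t, List.In x (lefts X) -> List.In t ts -> outcome TB x t.1 t.2 ->
     outcome TB (game_add K x) t.1 t.2) ->
  lw TB (lefts X) ts -> lw TB (lefts (game_add K X)) ts.
Proof.
move=> H; apply: lw_gen => x t Hx Ht Ho; exists (game_add K x), t; split => //.
  by apply/In_add_lefts; right; exists x.
exact: H.
Qed.

Lemma rw_both TB K X ts :
  (forall x, List.In x (rights X) -> forall t, List.In t ts -> outcome TB (game_add K x) t.1 t.2) ->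
  (forall k, List.In k (rights K) -> forall t, List.In t ts -> outcome TB (game_add k X) t.1 t.2) ->
  rw TB (rights (game_add K X)) ts.
Proof.
move=> H1 H2; apply/rwinP => y /In_add_rights [[k [Hk ->]]|[x [Hx ->]]]; auto.
Qed.

Lemma In_Pos_rights k K : Nn K -> List.In k (rights K) -> Pos k.
Proof. by move=> /all_In H /H. Qed.

Theorem AB TB n : forall K X, gsize K + gsize X <= n ->
  (Nn K -> forall p m, p <= TB -> outcome TB X p m -> outcome TB (game_add K X) p m) /\
  (Pos K -> forall q, q <= TB -> outcome TB X q false -> outcome TB (game_add K X) q true).
Proof.
elim: n => [|n IH] K X Hs.
  by have := gsize_pos K; lia.
have IHA : forall K' X', gsize K' + gsize X' <= n -> Nn K' ->
   forall p m, p <= TB -> outcome TB X' p m -> outcome TB (game_add K' X') p m.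
  by move=> K' X' H; case: (IH K' X' H).
have IHB : forall K' X', gsize K' + gsize X' <= n -> Pos K' ->
   forall q, q <= TB -> outcome TB X' q false -> outcome TB (game_add K' X') q true.
  by move=> K' X' H; case: (IH K' X' H).
split.
- move=> HN p m Hp HX; case/outP: (HX) => l Hl H.
  apply/outP; exists l => // r Hr; move: (H r Hr); clear H; rewrite /cond.
  case: m HX; case: (ltngtP l r) => Hlr HX /=.
  + move/rwinP => HH; apply: rw_both => [x Hx t [<-|//]|k Hk t [<-|//]] /=.
    * apply: IHA => //; [have := size_rights Hx; lia | lia | exact: (HH x Hx _ (or_introl erefl))].
    * have Hk' := In_Pos_rights HN Hk.
      apply: IHA; [have := size_rights Hk; lia | exact: Pos_Nn | lia | ].
      apply: monole HX; lia.
  + apply: lw_right => x t Hx [<-|[<-|//]] /= Ho;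
      (apply: IHA => //; [have := size_lefts Hx; lia | lia]).
  + apply: lw_right => x t Hx [<-|//] /= Ho;
      (apply: IHA => //; [have := size_lefts Hx; lia | lia]).
  + move/rwinP => HH; apply: rw_both => [x Hx t Ht|k Hk t [<-|[<-|//]]] /=.
    * apply: IHA => //; [have := size_rights Hx; lia | | exact: HH].
      by case: Ht => [<-|[<-|//]] /=; lia.
    * have Hk' := In_Pos_rights HN Hk.
      apply: IHA; [have := size_rights Hk; lia | exact: Pos_Nn | lia | ].
      apply: monole HX; lia.
    * have Hk' := In_Pos_rights HN Hk.
      apply: IHB; [have := size_rights Hk; lia | exact: Hk' | lia | ].
      apply: monole HX; lia.
  + apply: lw_right => x t Hx [<-|//] /= Ho;
      (apply: IHA => //; [have := size_lefts Hx; lia | lia]).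
  + move/rwinP => HH; apply: rw_both => [x Hx t [<-|//]|k Hk t [<-|//]] /=.
    * apply: IHA => //; [have := size_rights Hx; lia | lia | exact: (HH x Hx _ (or_introl erefl))].
    * have Hk' := In_Pos_rights HN Hk.
      apply: IHB; [have := size_rights Hk; lia | exact: Hk' | lia | ].
      apply: monole HX; lia.
- move=> HP q Hq HX; have HN := Pos_Nn HP.
  case/outP: (HX) => l Hl H.
  have HR : forall r, r <= TB - q -> l <= r -> l < r \/ l = r ->
      forall x, List.In x (rights X) -> outcome TB x (q + r) true.
    move=> r Hr Hlr1 Hlr x Hx; move: (H r Hr); rewrite /cond.
    case: (ltngtP l r) Hlr => Hlr' [Hc|Hc] //=; try lia.
    + by move/rwinP => HH; apply: (HH x Hx _ (or_intror (or_introl erefl))).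
    + by move/rwinP => HH; apply: (HH x Hx _ (or_introl erefl)).
  have Hright : forall r, r <= TB - q -> l <= r ->
      rw TB (rights (game_add K X)) [:: (q + r, true)].
    move=> r Hr Hlr; apply: rw_both => [x Hx t [<-|//]|k Hk t [<-|//]] /=.
    * apply: IHA => //; [have := size_rights Hx; lia | lia | ].
      apply: (HR r) => //; lia.
    * have Hk' := In_Pos_rights HN Hk.
      apply: IHB; [have := size_rights Hk; lia | exact: Hk' | lia | ].
      apply: monole HX; lia.
  case: l Hl H HR Hright => [|l] Hl H HR Hright.
  + apply/outP; exists 0 => // r Hr; rewrite /cond.
    case: r Hr => [|r] Hr /=; last by apply: Hright.
    move: HP; rewrite PosE => /andP [_ /has_In [kL [HkL HNkL]]].
    apply/lwinP; exists (game_add kL X); split; first by apply/In_add_lefts; left; exists kL.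
    exists (q - 0, false); split; first by left.
    rewrite subn0 /=; apply: IHA => //; have := size_lefts HkL; lia.
  + apply/outP; exists l; first lia.
    move=> r Hr; rewrite /cond.
    have HL : r <= l -> exists2 x, List.In x (lefts X) & outcome TB x (q - l.+1) false.
      move=> Hrl; move: (H r Hr); rewrite /cond.
      case: (ltngtP l.+1 r) => Hlr //=; try lia.
      by move/lwinP => [x [Hx [t [[<-|//] Ho]]]]; exists x.
    case: (ltngtP l r) => Hlr /=.
    * by apply: Hright.
    * have [x Hx Ho] := HL (ltnW Hlr).
      apply/lwinP; exists (game_add K x); split; first by apply/In_add_lefts; right; exists x.
      exists (q - l, false); split; first by right; left.
      apply: IHA => //=; [have := size_lefts Hx; lia | lia | ].
      apply: monole Ho; lia.
    * have [x Hx Ho] := HL (eq_leq (esym Hlr)).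
      apply/lwinP; exists (game_add K x); split; first by apply/In_add_lefts; right; exists x.
      exists (q - l, false); split; first by left.
      apply: IHA => //=; [have := size_lefts Hx; lia | lia | ].
      apply: monole Ho; lia.
Qed.


Lemma nmonole TB X p q m : p <= q -> q <= TB -> ~~ outcome TB X q m -> ~~ outcome TB X p m.
Proof. by move=> H1 H2; apply: contra; apply: monole. Qed.

Lemma nlw_get TB l ts : ~~ lw TB l ts ->
  forall x, List.In x l -> forall t, List.In t ts -> ~~ outcome TB x t.1 t.2.
Proof.
move=> H x Hx t Ht; apply/negP => Ho; move/negP: H; apply; apply/lwinP.
by exists x; split => //; exists t.
Qed.


Lemma nrw_get TB l ts : ~~ rw TB l ts ->
  exists x, List.In x l /\ exists t, List.In t ts /\ ~~ outcome TB x t.1 t.2.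
Proof.
rewrite /rw -has_predC => /has_In [x [Hx /=]].
rewrite -has_predC => /has_In [t [Ht /= Ho]].
by exists x; split => //; exists t.
Qed.

Lemma nlw_both TB K X ts :
  (forall x, List.In x (lefts X) -> forall t, List.In t ts -> ~~ outcome TB (game_add K x) t.1 t.2) ->
  (forall k, List.In k (lefts K) -> forall t, List.In t ts -> ~~ outcome TB (game_add k X) t.1 t.2) ->
  ~~ lw TB (lefts (game_add K X)) ts.
Proof.
move=> H1 H2; apply/negP => /lwinP [y [/In_add_lefts [[k [Hk ->]]|[x [Hx ->]]] [t [Ht Ho]]]].
  by move/negP: (H2 k Hk t Ht).
by move/negP: (H1 x Hx t Ht).
Qed.

Lemma nrw_right TB K X ts :
  (exists x, List.In x (rights X) /\ exists t, List.In t ts /\ ~~ outcome TB (game_add K x) t.1 t.2) ->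
  ~~ rw TB (rights (game_add K X)) ts.
Proof.
move=> [x [Hx [t [Ht Ho]]]]; apply/negP => /rwinP H.
by move/negP: Ho; apply; apply: H => //; apply/In_add_rights; right; exists x.
Qed.

Lemma nrw_left TB K X ts :
  (exists k, List.In k (rights K) /\ exists t, List.In t ts /\ ~~ outcome TB (game_add k X) t.1 t.2) ->
  ~~ rw TB (rights (game_add K X)) ts.
Proof.
move=> [k [Hk [t [Ht Ho]]]]; apply/negP => /rwinP H.
by move/negP: Ho; apply; apply: H => //; apply/In_add_rights; left; exists k.
Qed.

Lemma In_PosR_lefts k K : NnR K -> List.In k (lefts K) -> PosR k.
Proof. by move=> /all_In H /H. Qed.

Theorem ABR TB n : forall K X, gsize K + gsize X <= n ->
  (NnR K -> forall p m, p <= TB -> ~~ outcome TB X p m -> ~~ outcome TB (game_add K X) p m) /\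
  (PosR K -> forall q, q <= TB -> ~~ outcome TB X q true -> ~~ outcome TB (game_add K X) q false).
Proof.
elim: n => [|n IH] K X Hs.
  by have := gsize_pos K; lia.
have IHA : forall K' X', gsize K' + gsize X' <= n -> NnR K' ->
   forall p m, p <= TB -> ~~ outcome TB X' p m -> ~~ outcome TB (game_add K' X') p m.
  by move=> K' X' H; case: (IH K' X' H).
have IHB : forall K' X', gsize K' + gsize X' <= n -> PosR K' ->
   forall q, q <= TB -> ~~ outcome TB X' q true -> ~~ outcome TB (game_add K' X') q false.
  by move=> K' X' H; case: (IH K' X' H).
split.
- move=> HN p m Hp HX; apply/outNP => l Hl.
  have [r Hr Hc] := outNP _ _ _ _ HX l Hl.
  exists r => //; move: Hc; rewrite /cond.
  case: m HX; case: (ltngtP l r) => Hlr HX /= /[dup] Hc.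
  + move/nrw_get => [x [Hx [t [Ht Ho]]]]; apply: nrw_right; exists x; split => //.
    exists t; split => //; apply: IHA => //; first (have := size_rights Hx; lia).
    by case: Ht => [<-|//] /=; lia.
  + move/nlw_get => H; apply: nlw_both => [x Hx t Ht|k Hk t [<-|[<-|//]]] /=.
    * apply: IHA => //; first (have := size_lefts Hx; lia).
      by case: Ht => [<-|[<-|//]] /=; lia.
      exact: H.
    * have Hk' := In_PosR_lefts HN Hk.
      apply: IHA; [have := size_lefts Hk; lia | exact: PosR_NnR | lia | ].
      apply: nmonole HX; lia.
    * have Hk' := In_PosR_lefts HN Hk.
      apply: IHB; [have := size_lefts Hk; lia | exact: Hk' | lia | ].
      apply: nmonole HX; lia.
  + move/nlw_get => H; apply: nlw_both => [x Hx t Ht|k Hk t [<-|//]] /=.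
    * apply: IHA => //; first (have := size_lefts Hx; lia).
      by case: Ht => [<-|//] /=; lia.
      exact: H.
    * have Hk' := In_PosR_lefts HN Hk.
      apply: IHB; [have := size_lefts Hk; lia | exact: Hk' | lia | ].
      apply: nmonole HX; lia.
  + move/nrw_get => [x [Hx [t [Ht Ho]]]]; apply: nrw_right; exists x; split => //.
    exists t; split => //; apply: IHA => //; first (have := size_rights Hx; lia).
    by case: Ht => [<-|[<-|//]] /=; lia.
  + move/nlw_get => H; apply: nlw_both => [x Hx t Ht|k Hk t [<-|//]] /=.
    * apply: IHA => //; first (have := size_lefts Hx; lia).
      by case: Ht => [<-|//] /=; lia.
      exact: H.
    * have Hk' := In_PosR_lefts HN Hk.
      apply: IHA; [have := size_lefts Hk; lia | exact: PosR_NnR | lia | ].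
      apply: nmonole HX; lia.
  + move/nrw_get => [x [Hx [t [Ht Ho]]]]; apply: nrw_right; exists x; split => //.
    exists t; split => //; apply: IHA => //; first (have := size_rights Hx; lia).
    by case: Ht => [<-|//] /=; lia.
- move=> HP q Hq HX; have HN := PosR_NnR HP.
  apply/outNP => l Hl.
  have [rX HrX Hc] := outNP _ _ _ _ HX l Hl.
  have Hleft : (forall x, List.In x (lefts X) -> ~~ outcome TB x (q - l) false) ->
      ~~ lw TB (lefts (game_add K X)) [:: (q - l, false)].
    move=> HL; apply: nlw_both => [x Hx t [<-|//]|k Hk t [<-|//]] /=.
    * apply: IHA => //; [have := size_lefts Hx; lia | lia | exact: HL].
    * have Hk' := In_PosR_lefts HN Hk.
      apply: IHB; [have := size_lefts Hk; lia | exact: Hk' | lia | ].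
      apply: nmonole HX; lia.
  move: Hc; rewrite /cond /=.
  case: (ltngtP l rX) => Hlr /=.
  + move/nrw_get => [x [Hx [t [[<-|//] Ho]]]] /=.
    exists rX.-1; first lia.
    have Hx' : ~~ outcome TB (game_add K x) (q + rX.-1) true.
      apply: IHA => //; [have := size_rights Hx; lia | lia | ].
      apply: nmonole Ho => /=; lia.
    case: (ltngtP l rX.-1) => Hl2 /=; try lia.
    * apply: nrw_right; exists x; split => //; exists (q + rX.-1, true); split => //.
      by right; left.
    * apply: nrw_right; exists x; split => //; exists (q + rX.-1, true); split => //.
      by left.
  + move/nlw_get => H; exists rX => //.
    case: (ltngtP l rX) => Hl2 /=; try lia.
    apply: Hleft => x Hx; exact: (H x Hx (q - l, false) (or_intror (or_introl erefl))).
  + move/nlw_get => H; case: l Hl Hleft H Hlr => [|l] Hl Hleft H Hlr.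
    * exists 0; first lia.
      rewrite /=; move: HP; rewrite PosRE => /andP [_ /has_In [kR [HkR HNkR]]].
      apply: nrw_left; exists kR; split => //; exists (q + 0, true); split; first by left.
      rewrite addn0 /=; apply: IHA => //; have := size_rights HkR; lia.
    * exists l; first lia.
      case: (ltngtP l.+1 l) => Hl2 /=; try lia.
      apply: Hleft => x Hx; exact: (H x Hx (q - l.+1, false) (or_introl erefl)).
Qed.


Inductive iso : game -> game -> Prop :=
  isoI gl gr hl hr :
    (forall x, List.In x gl -> exists y, List.In y hl /\ iso x y) ->
    (forall y, List.In y hl -> exists x, List.In x gl /\ iso x y) ->
    (forall x, List.In x gr -> exists y, List.In y hr /\ iso x y) ->
    (forall y, List.In y hr -> exists x, List.In x gr /\ iso x y) ->
    iso (Game gl gr) (Game hl hr).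

Definition rl (R : game -> game -> Prop) l1 l2 :=
  (forall x, List.In x l1 -> exists y, List.In y l2 /\ R x y) /\
  (forall y, List.In y l2 -> exists x, List.In x l1 /\ R x y).

Lemma iso_inv g h : iso g h -> rl iso (lefts g) (lefts h) /\ rl iso (rights g) (rights h).
Proof. by case=> gl gr hl hr H1 H2 H3 H4 /=. Qed.

Lemma iso_intro g h : rl iso (lefts g) (lefts h) -> rl iso (rights g) (rights h) -> iso g h.
Proof. by case: g; case: h => hl hr gl gr /= [H1 H2] [H3 H4]; constructor. Qed.

Lemma rl_app R a b c d : rl R a b -> rl R c d -> rl R (a ++ c) (b ++ d).
Proof.
move=> [H1 H2] [H3 H4]; split => x; rewrite List.in_app_iff.
  by case=> [/H1|/H3] [y [Hy Hr]]; exists y; rewrite List.in_app_iff; auto.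
by case=> [/H2|/H4] [y [Hy Hr]]; exists y; rewrite List.in_app_iff; auto.
Qed.

Lemma rl_swap R a b c : rl R a (b ++ c) -> rl R a (c ++ b).
Proof.
move=> [H1 H2]; split => x Hx.
  have [y [Hy Hr]] := H1 x Hx; exists y; split => //.
  by apply/List.in_app_iff; apply/or_comm/List.in_app_iff.
by apply: H2; apply/List.in_app_iff; apply/or_comm/List.in_app_iff.
Qed.

Lemma rl_map R R1 (f g : game -> game) l1 l2 :
  (forall x y, List.In x l1 -> List.In y l2 -> R1 x y -> R (f x) (g y)) ->
  rl R1 l1 l2 -> rl R (map f l1) (map g l2).
Proof.
move=> H [H1 H2]; split => z; rewrite List.in_map_iff => -[x [<- Hx]].
  have [y [Hy Hr]] := H1 x Hx; exists (g y); split; last by auto.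
  by apply: List.in_map.
have [y [Hy Hr]] := H2 x Hx; exists (f y); split; last by auto.
by apply: List.in_map.
Qed.

Lemma rl_same R (f g : game -> game) l : (forall x, List.In x l -> R (f x) (g x)) -> rl R (map f l) (map g l).
Proof.
move=> H; split => z; rewrite List.in_map_iff => -[x [<- Hx]].
  by exists (g x); split; [apply: List.in_map | auto].
by exists (f x); split; [apply: List.in_map | auto].
Qed.

Lemma lw_rl TB l1 l2 ts :
  rl (fun x y => forall p m, outcome TB x p m = outcome TB y p m) l1 l2 ->
  lw TB l1 ts = lw TB l2 ts.
Proof.
move=> [H1 H2]; apply/idP/idP => /lwinP [x [Hx [t [Ht Ho]]]]; apply/lwinP.
  by have [y [Hy He]] := H1 x Hx; exists y; split => //; exists t; rewrite -He.
by have [y [Hy He]] := H2 x Hx; exists y; split => //; exists t; rewrite He.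
Qed.

Lemma rw_rl TB l1 l2 ts :
  rl (fun x y => forall p m, outcome TB x p m = outcome TB y p m) l1 l2 ->
  rw TB l1 ts = rw TB l2 ts.
Proof.
move=> [H1 H2]; apply/idP/idP => /rwinP H; apply/rwinP => x Hx t Ht.
  by have [y [Hy He]] := H2 x Hx; rewrite -He; apply: H.
by have [y [Hy He]] := H1 x Hx; rewrite He; apply: H.
Qed.

Lemma rl_weak (R R' : game -> game -> Prop) l1 l2 :
  (forall x y, List.In x l1 -> R x y -> R' x y) -> rl R l1 l2 -> rl R' l1 l2.
Proof.
move=> H [H1 H2]; split => x Hx.
  by have [y [Hy Hr]] := H1 x Hx; exists y; auto.
by have [y [Hy Hr]] := H2 x Hx; exists y; auto.
Qed.

Lemma iso_outcome TB g h : iso g h -> forall p m, outcome TB g p m = outcome TB h p m.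
Proof.
move: {2}(gsize g) (leqnn (gsize g)) => n; elim: n g h => [|n IH] g h Hs.
  by have := gsize_pos g; lia.
move=> /iso_inv [HL HR] p m; rewrite !outcome_def.
apply: eq_has => l; apply: eq_all => r; rewrite /cond.
have EL : forall ts, lw TB (lefts g) ts = lw TB (lefts h) ts.
  move=> ts; apply: lw_rl; apply: rl_weak HL => x y Hx Hi.
  apply: IH => //; have := size_lefts Hx; lia.
have ER : forall ts, rw TB (rights g) ts = rw TB (rights h) ts.
  move=> ts; apply: rw_rl; apply: rl_weak HR => x y Hx Hi.
  apply: IH => //; have := size_rights Hx; lia.
by rewrite !EL !ER.
Qed.

Lemma iso_refl g : iso g g.
Proof.
move: {2}(gsize g) (leqnn (gsize g)) => n; elim: n g => [|n IH] g Hs.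
  by have := gsize_pos g; lia.
apply: iso_intro; split => x Hx; exists x; split => //; apply: IH.
all: first [have := size_lefts Hx; lia | have := size_rights Hx; lia].
Qed.

Lemma iso_sym g h : iso g h -> iso h g.
Proof.
move: {2}(gsize g) (leqnn (gsize g)) => n; elim: n g h => [|n IH] g h Hs.
  by have := gsize_pos g; lia.
move=> /iso_inv [[H1 H2] [H3 H4]]; apply: iso_intro; split => x Hx.
- have [y [Hy Hi]] := H2 x Hx; exists y; split => //; apply: IH Hi; have := size_lefts Hy; lia.
- have [y [Hy Hi]] := H1 x Hx; exists y; split => //; apply: IH Hi; have := size_lefts Hx; lia.
- have [y [Hy Hi]] := H4 x Hx; exists y; split => //; apply: IH Hi; have := size_rights Hy; lia.
- have [y [Hy Hi]] := H3 x Hx; exists y; split => //; apply: IH Hi; have := size_rights Hx; lia.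
Qed.

Lemma iso_trans g h k : iso g h -> iso h k -> iso g k.
Proof.
move: {2}(gsize h) (leqnn (gsize h)) => n; elim: n g h k => [|n IH] g h k Hs.
  by have := gsize_pos h; lia.
move=> /iso_inv [[H1 H2] [H3 H4]] /iso_inv [[K1 K2] [K3 K4]]; apply: iso_intro; split => x Hx.
- have [y [Hy Hi]] := H1 x Hx; have [z [Hz Hj]] := K1 y Hy; exists z; split => //.
  by apply: IH Hi Hj; have := size_lefts Hy; lia.
- have [y [Hy Hi]] := K2 x Hx; have [z [Hz Hj]] := H2 y Hy; exists z; split => //.
  by apply: IH Hj Hi; have := size_lefts Hy; lia.
- have [y [Hy Hi]] := H3 x Hx; have [z [Hz Hj]] := K3 y Hy; exists z; split => //.
  by apply: IH Hi Hj; have := size_rights Hy; lia.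
- have [y [Hy Hi]] := K4 x Hx; have [z [Hz Hj]] := H4 y Hy; exists z; split => //.
  by apply: IH Hj Hi; have := size_rights Hy; lia.
Qed.

Lemma iso_add A A' B B' : iso A A' -> iso B B' -> iso (game_add A B) (game_add A' B').
Proof.
move: {2}(gsize A + gsize B) (leqnn (gsize A + gsize B)) => n.
elim: n A A' B B' => [|n IH] A A' B B' Hs.
  by have := gsize_pos A; lia.
move=> HA HB; have [HAL HAR] := iso_inv HA; have [HBL HBR] := iso_inv HB.
apply: iso_intro; rewrite ?lefts_add ?rights_add; apply: rl_app.
- apply: rl_map HAL => x y Hx Hy Hi; apply: IH => //; have := size_lefts Hx; lia.
- apply: rl_map HBL => x y Hx Hy Hi; apply: IH => //; have := size_lefts Hx; lia.
- apply: rl_map HAR => x y Hx Hy Hi; apply: IH => //; have := size_rights Hx; lia.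
- apply: rl_map HBR => x y Hx Hy Hi; apply: IH => //; have := size_rights Hx; lia.
Qed.

Lemma iso_comm A B : iso (game_add A B) (game_add B A).
Proof.
move: {2}(gsize A + gsize B) (leqnn (gsize A + gsize B)) => n.
elim: n A B => [|n IH] A B Hs.
  by have := gsize_pos A; lia.
apply: iso_intro; rewrite ?lefts_add ?rights_add; apply: rl_swap; apply: rl_app.
- apply: rl_same => x Hx; apply: IH; have := size_lefts Hx; lia.
- apply: rl_same => x Hx; apply: IH; have := size_lefts Hx; lia.
- apply: rl_same => x Hx; apply: IH; have := size_rights Hx; lia.
- apply: rl_same => x Hx; apply: IH; have := size_rights Hx; lia.
Qed.

Lemma iso_assoc A B C : iso (game_add (game_add A B) C) (game_add A (game_add B C)).
Proof.
move: {2}(gsize A + gsize B + gsize C) (leqnn (gsize A + gsize B + gsize C)) => n.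
elim: n A B C => [|n IH] A B C Hs.
  by have := gsize_pos A; lia.
apply: iso_intro; rewrite ?lefts_add ?rights_add !map_cat -!map_comp -catA; apply: rl_app;
  try apply: rl_app; apply: rl_same => x Hx /=; apply: IH;
  first [have := size_lefts Hx; lia | have := size_rights Hx; lia].
Qed.

Lemma iso_zero X : iso (game_add zero X) X.
Proof.
move: {2}(gsize X) (leqnn (gsize X)) => n; elim: n X => [|n IH] X Hs.
  by have := gsize_pos X; lia.
apply: iso_intro; rewrite ?lefts_add ?rights_add /=.
- split => x Hx.
  + move: Hx; rewrite List.in_map_iff => -[y [<- Hy]]; exists y; split => //.
    apply: IH; have := size_lefts Hy; lia.
  + exists (game_add zero x); split; first by apply: List.in_map.
    apply: IH; have := size_lefts Hx; lia.
- split => x Hx.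
  + move: Hx; rewrite List.in_map_iff => -[y [<- Hy]]; exists y; split => //.
    apply: IH; have := size_rights Hy; lia.
  + exists (game_add zero x); split; first by apply: List.in_map.
    apply: IH; have := size_rights Hx; lia.
Qed.


Definition ge A C := Nn (game_add A (game_conj C)).
Definition gt A C := Pos (game_add A (game_conj C)).
Definition geR A C := NnR (game_add A (game_conj C)).
Definition gtR A C := PosR (game_add A (game_conj C)).

Lemma geE A C : ge A C = all (fun a => gt a C) (rights A) && all (fun c => gt A c) (lefts C).
Proof. by rewrite /ge /Nn rights_add rights_conj all_cat !all_map. Qed.
Lemma gtE A C : gt A C = ge A C &&
  (has (fun a => ge a C) (lefts A) || has (fun c => ge A c) (rights C)).
Proof. by rewrite /gt PosE -/(ge A C) lefts_add lefts_conj has_cat !has_map. Qed.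
Lemma geRE A C : geR A C = all (fun a => gtR a C) (lefts A) && all (fun c => gtR A c) (rights C).
Proof. by rewrite /geR /NnR lefts_add lefts_conj all_cat !all_map. Qed.
Lemma gtRE A C : gtR A C = geR A C &&
  (has (fun a => geR a C) (rights A) || has (fun c => geR A c) (lefts C)).
Proof. by rewrite /gtR PosRE -/(geR A C) rights_add rights_conj has_cat !has_map. Qed.

Lemma eq_all_In (T : Type) (a b : pred T) s : (forall x, List.In x s -> a x = b x) -> all a s = all b s.
Proof. elim: s => //= x s IH H; rewrite H; [rewrite IH // => y Hy; apply: H; right | left]; done. Qed.
Lemma eq_has_In (T : Type) (a b : pred T) s : (forall x, List.In x s -> a x = b x) -> has a s = has b s.
Proof. elim: s => //= x s IH H; rewrite H; [rewrite IH // => y Hy; apply: H; right | left]; done. Qed.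
Lemma nall_In (T : Type) (a : pred T) s : ~~ all a s -> exists x, List.In x s /\ ~~ a x.
Proof. by rewrite -has_predC => /has_In. Qed.

Lemma geR_ge n : forall A C, gsize A + gsize C <= n -> geR A C = ge C A /\ gtR A C = gt C A.
Proof.
elim: n => [|n IH] A C Hs; first by have := gsize_pos A; lia.
have E1 : geR A C = ge C A.
  rewrite geRE geE andbC; congr (_ && _); apply: eq_all_In => x Hx.
  + by case: (IH A x) => //; have := size_rights Hx; lia.
  + by case: (IH x C) => //; have := size_lefts Hx; lia.
split => //; rewrite gtRE gtE E1 orbC; congr (_ && (_ || _)); apply: eq_has_In => x Hx.
+ by case: (IH A x) => //; have := size_lefts Hx; lia.
+ by case: (IH x C) => //; have := size_rights Hx; lia.
Qed.

Lemma gt_ge A C : gt A C -> ge A C.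
Proof. by rewrite gtE => /andP []. Qed.

Lemma trans_all n : forall A B C, gsize A + gsize B + gsize C <= n ->
  [/\ (ge A B -> ge B C -> ge A C), (gt A B -> ge B C -> gt A C) & (ge A B -> gt B C -> gt A C)].
Proof.
elim: n => [|n IH] A B C Hs; first by have := gsize_pos A; lia.
have T1 : ge A B -> ge B C -> ge A C.
  rewrite !geE => /andP [/all_In HAR /all_In HBL] /andP [/all_In HBR /all_In HCL].
  apply/andP; split; apply/all_In => x Hx.
  + have [_ T2 _] := IH x B C ltac:(have := size_rights Hx; lia).
    by apply: T2; [apply: HAR | rewrite geE; apply/andP; split; apply/all_In].
  + have [_ _ T3] := IH A B x ltac:(have := size_lefts Hx; lia).
    by apply: T3; [rewrite geE; apply/andP; split; apply/all_In | apply: HCL].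
split => //.
- move=> HAB HBC; rewrite gtE (T1 (gt_ge HAB) HBC) /=.
  move: HAB; rewrite gtE => /andP [HAB /orP [/has_In [a [Ha Hge]]|/has_In [b [Hb Hge]]]].
  + have [T1' _ _] := IH a B C ltac:(have := size_lefts Ha; lia).
    by apply/orP; left; apply/has_In; exists a; split => //; apply: T1'.
  + move: (HBC); rewrite geE => /andP [/all_In HBR _].
    move: (HBR b Hb); rewrite gtE => /andP [_ /orP [/has_In [b' [Hb' Hge']]|/has_In [c [Hc Hge']]]].
    * have [_ T2' _] := IH A b' C ltac:(have := size_lefts Hb'; have := size_rights Hb; lia).
      have HAb' : gt A b' by move: Hge; rewrite geE => /andP [_ /all_In]; apply.
      by move: (T2' HAb' Hge'); rewrite gtE => /andP [].
    * have [T1' _ _] := IH A b c ltac:(have := size_rights Hb; have := size_rights Hc; lia).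
      by apply/orP; right; apply/has_In; exists c; split => //; apply: T1'.
- move=> HAB HBC; rewrite gtE (T1 HAB (gt_ge HBC)) /=.
  move: HBC; rewrite gtE => /andP [_ /orP [/has_In [b [Hb Hge]]|/has_In [c [Hc Hge]]]].
  + have [_ T2' _] := IH A b C ltac:(have := size_lefts Hb; lia).
    have HAb : gt A b by move: HAB; rewrite geE => /andP [_ /all_In]; apply.
    by move: (T2' HAb Hge); rewrite gtE => /andP [].
  + have [T1' _ _] := IH A B c ltac:(have := size_rights Hc; lia).
    by apply/orP; right; apply/has_In; exists c; split => //; apply: T1'.
Qed.

Lemma ge_trans A B C : ge A B -> ge B C -> ge A C.
Proof. by case: (trans_all (leqnn (gsize A + gsize B + gsize C))). Qed.
Lemma gt_ge_trans A B C : gt A B -> ge B C -> gt A C.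
Proof. by case: (trans_all (leqnn (gsize A + gsize B + gsize C))). Qed.
Lemma ge_gt_trans A B C : ge A B -> gt B C -> gt A C.
Proof. by case: (trans_all (leqnn (gsize A + gsize B + gsize C))). Qed.

Inductive SN : game -> Prop :=
  SNI l r : (forall x, List.In x l -> SN x) -> (forall x, List.In x r -> SN x) ->
    (forall x, List.In x r -> gt x (Game l r)) -> (forall x, List.In x l -> gt (Game l r) x) ->
    SN (Game l r).

Lemma SN_inv g : SN g ->
  [/\ forall x, List.In x (lefts g) -> SN x, forall x, List.In x (rights g) -> SN x,
      forall x, List.In x (rights g) -> gt x g & forall x, List.In x (lefts g) -> gt g x].
Proof. by case. Qed.

Lemma ge_refl A : SN A -> ge A A.
Proof. by case/SN_inv => _ _ H1 H2; rewrite geE; apply/andP; split; apply/all_In. Qed.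

Lemma dich n : forall A B, gsize A + gsize B <= n -> SN A -> SN B -> ge A B \/ gt B A.
Proof.
elim: n => [|n IH] A B Hs; first by have := gsize_pos A; lia.
move=> SA SB; case E: (ge A B); first by left.
right; move/negbT: E; rewrite geE negb_and => /orP [/nall_In [a [Ha Hn]]|/nall_In [b [Hb Hn]]].
- have [_ SAR HAR _] := SN_inv SA.
  case: (IH B a) => //; first (have := size_rights Ha; lia); first exact: SAR.
    by move=> HBa; apply: ge_gt_trans HBa (HAR a Ha).
  by move=> H; rewrite H in Hn.
- have [SBL _ _ HBL] := SN_inv SB.
  case: (IH b A) => //; first (have := size_lefts Hb; lia); first exact: SBL.
    by move=> HbA; apply: gt_ge_trans (HBL b Hb) HbA.
  by move=> H; rewrite H in Hn.
Qed.


Lemma thA TB K X p m : Nn K -> p <= TB -> outcome TB X p m -> outcome TB (game_add K X) p m.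
Proof. by move=> HN; case: (AB TB (leqnn (gsize K + gsize X))) => H _; apply: H. Qed.

Lemma thAR TB K X p m : NnR K -> p <= TB -> ~~ outcome TB X p m -> ~~ outcome TB (game_add K X) p m.
Proof. by move=> HN; case: (ABR TB (leqnn (gsize K + gsize X))) => H _; apply: H. Qed.

Lemma NnR_self Y : SN Y -> NnR (game_add Y (game_conj Y)).
Proof.
move=> SY; have [E _] := geR_ge (leqnn (gsize Y + gsize Y)).
by rewrite -/(geR Y Y) E; apply: ge_refl.
Qed.

Lemma iso_rearr X Y Z :
  iso (game_add (game_add X (game_conj Y)) (game_add Y Z))
      (game_add (game_add Y (game_conj Y)) (game_add X Z)).
Proof.
set Yb := game_conj Y.
apply: iso_trans (iso_assoc _ _ _) _.
apply: iso_trans (iso_add (iso_refl X) (iso_sym (iso_assoc _ _ _))) _.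
apply: iso_trans (iso_add (iso_refl X) (iso_add (iso_comm Yb Y) (iso_refl Z))) _.
apply: iso_trans (iso_sym (iso_assoc _ _ _)) _.
apply: iso_trans (iso_add (iso_comm _ _) (iso_refl Z)) _.
exact: iso_assoc.
Qed.

Lemma sound TB X Y : ge X Y -> SN Y -> game_ge TB X Y.
Proof.
move=> HXY SY Z p m Hp HYZ.
have H1 := thA (K := game_add X (game_conj Y)) HXY Hp HYZ.
rewrite (iso_outcome TB (iso_rearr X Y Z)) in H1.
move: H1; apply: contraTT => HXZ.
exact: thAR (NnR_self SY) Hp HXZ.
Qed.

Lemma game_ge_trans TB A B C : game_ge TB A B -> game_ge TB B C -> game_ge TB A C.
Proof. by move=> H1 H2 X p m Hp H; apply: H1 => //; apply: H2. Qed.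

Lemma number_SN TB G : is_number TB G -> SN G.
Proof.
elim=> l r Hl IHl Hr IHr HgL HgR.
set G0 := Game l r.
have Q1 : forall H, SN H -> (exists g, List.In g r /\ ge H g) -> gt H G0.
  move=> H; move: {2}(gsize H) (leqnn (gsize H)) => n; elim: n H => [|n IH] H Hs.
    by have := gsize_pos H; lia.
  move=> SH [g [Hg HHg]]; have [SHL SHR HHR HHL] := SN_inv SH.
  rewrite gtE; apply/andP; split; last by apply/orP; right; apply/has_In; exists g.
  rewrite geE; apply/andP; split; apply/all_In => x Hx.
  - apply: IH; [have := size_rights Hx; lia | exact: SHR | ].
    by exists g; split => //; apply: gt_ge; apply: gt_ge_trans (HHR x Hx) HHg.
  - case: (dich (leqnn (gsize x + gsize H)) (IHl x Hx) SH) => // HxH.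
    exfalso; apply: (proj2 (HgR g Hg)).
    apply: game_ge_trans (proj1 (HgL x Hx)) _.
    apply: game_ge_trans (@sound TB _ _ HxH SH) _.
    exact: @sound TB _ _ HHg (IHr g Hg).
have Q2 : forall H, SN H -> (exists c, List.In c l /\ ge c H) -> gt G0 H.
  move=> H; move: {2}(gsize H) (leqnn (gsize H)) => n; elim: n H => [|n IH] H Hs.
    by have := gsize_pos H; lia.
  move=> SH [c [Hc HcH]]; have [SHL SHR HHR HHL] := SN_inv SH.
  rewrite gtE; apply/andP; split; last by apply/orP; left; apply/has_In; exists c.
  rewrite geE; apply/andP; split; apply/all_In => x Hx.
  - case: (dich (leqnn (gsize H + gsize x)) SH (IHr x Hx)) => // HHx.
    exfalso; apply: (proj2 (HgR x Hx)).
    apply: game_ge_trans (proj1 (HgL c Hc)) _.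
    apply: game_ge_trans (@sound TB _ _ HcH SH) _.
    exact: @sound TB _ _ HHx (IHr x Hx).
  - apply: IH; [have := size_lefts Hx; lia | exact: SHL | ].
    by exists c; split => //; apply: gt_ge; apply: ge_gt_trans HcH (HHL x Hx).
constructor => // x Hx.
- by apply: Q1; [exact: IHr | exists x; split => //; apply: ge_refl; apply: IHr].
- by apply: Q2; [exact: IHl | exists x; split => //; apply: ge_refl; apply: IHl].
Qed.

Unset Implicit Arguments.

Theorem mainTheorem7 (TB : nat) (G : game) :
  is_number TB G -> game_eq TB (game_add G (game_conj G)) zero.
Proof.
move=> /number_SN SG; have HN : Nn (game_add G (game_conj G)) by apply: ge_refl.
have HNR := NnR_self SG.
split => Z p m Hp H.
- rewrite (iso_outcome TB (iso_zero Z)) in H; exact: thA HN Hp H.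
- rewrite (iso_outcome TB (iso_zero Z)); move: H; apply: contraTT => HZ.
  exact: thAR HNR Hp HZ.
Qed.
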